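(* Let $P=\mathbb{Q}[x_1,\dots,x_n]$, let $\sigma$ and $\tau$ be two term orderings on $\mathbb{T}^n$, and let $I$ be a non-zero ideal in $P$. Let $p$ and $q$ be primes which are $\sigma$-good for $I$. If $O_\tau(I_{(q,\sigma)})\prec_\tau O_\tau(I_{(p,\sigma)})$, then $q$ is $\tau$-bad for $I$.
   Context: $\mathbb{T}^n$ is the monoid of power-products in $x_1,\dots,x_n$. For $f\in P$, $\operatorname{den}(f)$ is the positive lcm of the denominators of its coefficients; $\operatorname{den}(G)$ is the lcm of $\operatorname{den}(g)$, $g\in G$. For a term ordering $\rho$ with $G_\rho$ the reduced $\rho$-Gröbner basis of $I$, a prime $p$ is $\rho$-good for $I$ if $p\nmid\operatorname{den}(G_\rho)$ and $\rho$-bad otherwise. For $\sigma$-good $p$, $\pi_p$ is coefficientwise reduction modulo $p$ into $\mathbb{F}_p[x_1,\dots,x_n]$ and $I_{(p,\sigma)}$ is the ideal of $\mathbb{F}_p[x_1,\dots,x_n]$ generated by $\pi_p(G_\sigma)$. A tuple $(t_1,\dots,t_r)$ of distinct power-products is $\tau$-ordered if $t_1<_\tau\cdots<_\tau t_r$. For an ideal $J$ in a polynomial ring over a field, $O_\tau(J)$ is the $\tau$-ordered tuple of the leading terms of a minimal $\tau$-Gröbner basis of $J$. For $\tau$-ordered tuples $T=(t_1,\dots,t_r)$ and $T'=(t'_1,\dots,t'_{r'})$, $T'\prec_\tau T$ means either $T$ is a proper prefix of $T'$ (i.e. $r<r'$ and $t_i=t'_i$ for $i\le r$), or there is $k\le\min(r,r')$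 with $t_i=t'_i$ for $i<k$ and $t'_k<_\tau t_k$. *)

(* Defs.v *)
From HB Require Import structures.
From mathcomp Require Import all_boot all_order all_algebra.
From mathcomp Require Import mpoly.

Set Implicit Arguments.
Unset Strict Implicit.
Unset Printing Implicit Defensive.

Import Order.TTheory GRing.Theory Num.Theory.
Local Open Scope ring_scope.

Section Defs.
Variable n : nat.

(* A term ordering on the monoid T^n = 'X_{1..n} of power products:
   a total order, compatible with multiplication (= addition of exponents),
   with 1 (the zero multinomial) as least element. *)
Definition term_ordering (le : rel 'X_{1..n}) : Prop :=
  (forall m, le m m) /\
  [/\ (forall m1 m2, le m1 m2 -> le m2 m1 -> m1 = m2),
      (forall m1 m2 m3, le m1 m2 -> le m2 m3 -> le m1 m3),
      (forall m1 m2, le m1 m2 || le m2 m1),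
      (forall m1 m2 m3, le m1 m2 -> le (m1 + m3)%MM (m2 + m3)%MM) &
      (forall m, le 0%MM m)].

Definition tlt (le : rel 'X_{1..n}) (m1 m2 : 'X_{1..n}) : bool :=
  le m1 m2 && (m1 != m2).

Variable R : comRingType.

(* Leading term of f w.r.t. le: the le-maximum of the support of f
   (for f != 0 and le a term ordering). *)
Definition LT (le : rel 'X_{1..n}) (f : {mpoly R[n]}) : 'X_{1..n} :=
  foldr (fun m acc => if le acc m then m else acc) 0%MM (msupp f).

Definition LC (le : rel 'X_{1..n}) (f : {mpoly R[n]}) : R := f@_(LT le f).

Definition is_ideal (J : {mpoly R[n]} -> Prop) : Prop :=
  [/\ J 0,
      (forall f g, J f -> J g -> J (f + g)) &
      (forall h f, J f -> J (h * f))].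

Definition gen_ideal (S : seq {mpoly R[n]}) (f : {mpoly R[n]}) : Prop :=
  exists hs : seq {mpoly R[n]},
    size hs = size S /\ f = \sum_(i < size S) hs`_i * S`_i.

(* G is a le-Groebner basis of J: G is contained in J and the leading terms
   of G generate the leading term ideal of J. *)
Definition groebner (le : rel 'X_{1..n}) (J : {mpoly R[n]} -> Prop)
    (G : seq {mpoly R[n]}) : Prop :=
  (forall g, g \in G -> J g) /\
  (forall f, J f -> f != 0 ->
     exists2 g, g \in G & (g != 0) && (LT le g <= LT le f)%MM).

Definition minimal_groebner (le : rel 'X_{1..n}) (J : {mpoly R[n]} -> Prop)
    (G : seq {mpoly R[n]}) : Prop :=
  [/\ groebner le J G, uniq G,
      (forall g, g \in G -> LC le g = 1) &
      (forall g g', g \in G -> g' \in G -> g != g' ->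
          ~~ (LT le g' <= LT le g)%MM)].

Definition reduced_groebner (le : rel 'X_{1..n}) (J : {mpoly R[n]} -> Prop)
    (G : seq {mpoly R[n]}) : Prop :=
  [/\ groebner le J G, uniq G,
      (forall g, g \in G -> LC le g = 1) &
      (forall g g' m, g \in G -> g' \in G -> g != g' -> m \in msupp g ->
          ~~ (LT le g' <= m)%MM)].

Definition O_tuple (le : rel 'X_{1..n}) (J : {mpoly R[n]} -> Prop)
    (T : seq 'X_{1..n}) : Prop :=
  sorted (tlt le) T /\
  exists G, minimal_groebner le J G /\ perm_eq T (map (LT le) G).

End Defs.

Definition prec n (le : rel 'X_{1..n}) (T' T : seq 'X_{1..n}) : Prop :=
  (size T < size T' /\ T = take (size T) T')%N \/
  exists k, [/\ (k < size T)%N, (k < size T')%N,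
                take k T = take k T' & tlt le (nth 0%MM T' k) (nth 0%MM T k)].

Definition den n (f : {mpoly rat[n]}) : nat :=
  \big[lcmn/1%N]_(m <- msupp f) `|denq f@_m|%N.

Definition denG n (G : seq {mpoly rat[n]}) : nat :=
  \big[lcmn/1%N]_(g <- G) den g.

(* reduction modulo p of a rational number (meaningful when p does not
   divide its denominator) and of a polynomial, coefficientwise. *)
Definition rat_to_Fp (p : nat) (x : rat) : 'F_p :=
  (numq x)%:~R / (denq x)%:~R.

Definition pi_p (p : nat) n (f : {mpoly rat[n]}) : {mpoly 'F_p[n]} :=
  map_mpoly (rat_to_Fp p) f.

Definition I_mod (p : nat) n (Gs : seq {mpoly rat[n]}) : {mpoly 'F_p[n]} -> Prop :=
  gen_ideal (map (@pi_p p n) Gs).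

(* p is le-good / le-bad for I, where G is the reduced le-GB of I. *)
Definition good n (p : nat) (G : seq {mpoly rat[n]}) : Prop :=
  prime p /\ ~~ (p %| denG G)%N.
Definition bad n (p : nat) (G : seq {mpoly rat[n]}) : Prop :=
  prime p /\ (p %| denG G)%N.

Arguments rat_to_Fp p x : clear implicits.
Arguments pi_p p {n} f.
Arguments I_mod p {n} Gs _.

(* Main.v *)
Require Import Defs.
From HB Require Import structures.
From mathcomp Require Import all_boot all_order all_algebra.
From mathcomp Require Import mpoly.
From mathcomp Require Import ring.
From Stdlib Require Import Classical ClassicalEpsilon.
Set Implicit Arguments.
Unset Strict Implicit.
Unset Printing Implicit Defensive.
Import Order.TTheory GRing.Theory Num.Theory.
Local Open Scope ring_scope.

Section TO.
Variables (n : nat) (le : rel 'X_{1..n}) (Hle : term_ordering le).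

Lemma to_refl m : le m m. Proof. by case: Hle. Qed.
Lemma to_anti m1 m2 : le m1 m2 -> le m2 m1 -> m1 = m2.
Proof. by move: Hle => [_ [H _ _ _ _]]; apply: H. Qed.
Lemma to_trans m1 m2 m3 : le m1 m2 -> le m2 m3 -> le m1 m3.
Proof. by move: Hle => [_ [_ H _ _ _]]; apply: H. Qed.
Lemma to_total m1 m2 : le m1 m2 || le m2 m1.
Proof. by move: Hle => [_ [_ _ H _ _]]. Qed.
Lemma to_add m1 m2 m3 : le m1 m2 -> le (m1 + m3)%MM (m2 + m3)%MM.
Proof. by move: Hle => [_ [_ _ _ H _]]; apply: H. Qed.
Lemma to_addl m1 m2 m3 : le m1 m2 -> le (m3 + m1)%MM (m3 + m2)%MM.
Proof. by rewrite ![(m3 + _)%MM]addmC; apply: to_add. Qed.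
Lemma to_0 m : le 0%MM m.
Proof. by move: Hle => [_ [_ _ _ _ H]]. Qed.
Lemma to_div m1 m2 : (m1 <= m2)%MM -> le m1 m2.
Proof.
move=> H; rewrite -(submK H); have := to_add m1 (to_0 (m2 - m1)%MM).
by rewrite add0m.
Qed.
Lemma to_nle m1 m2 : ~~ le m1 m2 -> le m2 m1.
Proof. by have := to_total m1 m2; case: (le m1 m2). Qed.
Lemma tltP m1 m2 : tlt le m1 m2 = le m1 m2 && (m1 != m2).
Proof. by []. Qed.
Lemma tlt_nle m1 m2 : tlt le m1 m2 = ~~ le m2 m1.
Proof.
rewrite /tlt; case H: (le m2 m1) => /=.
  case H': (le m1 m2) => //=; by rewrite (to_anti H' H) eqxx.
rewrite (to_nle (negbT H)) /=; apply/eqP => E; by rewrite E to_refl in H.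
Qed.
Lemma tlt_le_trans m1 m2 m3 : tlt le m1 m2 -> le m2 m3 -> tlt le m1 m3.
Proof.
rewrite !tlt_nle => H1 H2; apply/negP => H3; by rewrite (to_trans H2 H3) in H1.
Qed.
Lemma le_tlt_trans m1 m2 m3 : le m1 m2 -> tlt le m2 m3 -> tlt le m1 m3.
Proof.
rewrite !tlt_nle => H1 H2; apply/negP => H3; by rewrite (to_trans H3 H1) in H2.
Qed.
Lemma tltW m1 m2 : tlt le m1 m2 -> le m1 m2.
Proof. by case/andP. Qed.

Definition mx (s : seq 'X_{1..n}) :=
  foldr (fun m acc => if le acc m then m else acc) 0%MM s.

Lemma mx_ub s m : m \in s -> le m (mx s).
Proof.
elim: s => //= x s IH; rewrite inE => /orP [/eqP ->|/IH H].
  by case: ifP => [_|H]; [exact: to_refl | exact: to_nle (negbT H)].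
case: ifP => // H'; exact: to_trans H H'.
Qed.

Lemma mx_mem s : mx s \in 0%MM :: s.
Proof.
elim: s => [|x s IH] /=; first by rewrite inE.
case: ifP => _; first by rewrite !inE eqxx orbT.
by move: IH; rewrite !inE => /orP [->|->] //; rewrite !orbT.
Qed.

Variable R : comRingType.
Implicit Types f g : {mpoly R[n]}.

Lemma LT_max f m : m \in msupp f -> le m (LT le f).
Proof. exact: mx_ub. Qed.

Lemma LT_in f : f != 0 -> LT le f \in msupp f.
Proof.
move=> nz; have [m Hm] : exists m, m \in msupp f.
  move: nz; rewrite -msupp_eq0; case: (msupp f) => [|m s] //= _.
  by exists m; rewrite inE eqxx.
have := mx_mem (msupp f); rewrite inE; case/orP => [/eqP E|//].
have := LT_max Hm; change (LT le f) with (mx (msupp f)); rewrite E => H.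
by rewrite -(to_anti H (to_0 m)).
Qed.

Lemma LT_unique f m : m \in msupp f -> (forall m', m' \in msupp f -> le m' m) ->
  LT le f = m.
Proof.
move=> Hm H; have nz : f != 0 by rewrite -msupp_eq0; case: (msupp f) Hm.
apply: to_anti; [exact: H (LT_in nz) | exact: LT_max].
Qed.



Lemma LT_lt f w : (forall m, m \in msupp f -> le m w) -> w \notin msupp f ->
  f != 0 -> tlt le (LT le f) w.
Proof.
move=> H Hw nz; rewrite /tlt H ?LT_in //=; apply/eqP => E.
by rewrite -E LT_in in Hw.
Qed.

End TO.

Lemma msupp00 n (R : comRingType) : msupp (0 : {mpoly R[n]}) = [::].
Proof. by apply/eqP; rewrite msupp_eq0. Qed.

Lemma LT_eq_supp n (le : rel 'X_{1..n}) (Hle : term_ordering le) (R S : comRingType) (f : {mpoly R[n]}) (g : {mpoly S[n]}) :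
  msupp f =i msupp g -> LT le f = LT le g.
Proof.
move=> E; have [f0|nzf] := eqVneq f 0.
  have [g0|nzg] := eqVneq g 0.
    rewrite /LT; move/eqP: f0; rewrite -msupp_eq0 => /eqP ->.
    by move/eqP: g0; rewrite -msupp_eq0 => /eqP ->.
  by have := LT_in Hle nzg; rewrite -E f0 (msupp00 n R).
have nzg : g != 0.
  by apply/eqP => g0; have := LT_in Hle nzf; rewrite E g0 (msupp00 n S).
apply: (to_anti Hle); [apply: (LT_max Hle); rewrite -E; exact: (LT_in Hle) |
                  apply: (LT_max Hle); rewrite E; exact: (LT_in Hle)].
Qed.

Lemma nat_min_tail (a : nat -> nat) N :
  exists j, (N < j)%N /\ forall j', (N < j')%N -> (a j <= a j')%N.
Proof.
suff H : forall v, (exists j, (N < j)%N /\ (a j <= v)%N) ->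
   exists j, (N < j)%N /\ forall j', (N < j')%N -> (a j <= a j')%N.
  by apply: (H (a N.+1)); exists N.+1.
elim=> [|v IH] [j [Nj aj]].
  by exists j; split => // j' _; move: aj; rewrite leqn0 => /eqP ->.
case: (classic (exists j, (N < j)%N /\ (a j <= v)%N)) => [/IH //|Hn].
exists j; split => // j' Nj'; apply: leq_trans aj _.
by rewrite leqNgt; apply/negP => H; apply: Hn; exists j'; split.
Qed.

Lemma nat_subseq (a : nat -> nat) : exists psi : nat -> nat,
  (forall k, psi k < psi k.+1)%N /\ (forall k, a (psi k) <= a (psi k.+1))%N.
Proof.
have H N : {j | (N < j)%N /\ forall j', (N < j')%N -> (a j <= a j')%N}.
  exact: constructive_indefinite_description (nat_min_tail a N).
pose jf N := sval (H N).
have jfP N : (N < jf N)%N /\ forall j', (N < j')%N -> (a (jf N) <= a j')%N.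
  exact: (svalP (H N)).
exists (fun k => iter k.+1 jf 0%N); split => k.
  by rewrite iterS; case: (jfP (iter k.+1 jf 0%N)).
rewrite [iter k.+1 _ _]iterS; case: (jfP (iter k jf 0%N)) => lt1 H1.
apply: H1; rewrite iterS; apply: ltn_trans lt1 _.
by case: (jfP (jf (iter k jf 0%N))).
Qed.

Section Dickson.
Variable n : nat.

Lemma dickson_sub (s : nat -> 'X_{1..n}) k : (k <= n)%N ->
  exists phi : nat -> nat, (forall j, phi j < phi j.+1)%N /\
    forall (i : 'I_n), (i < k)%N -> forall j, (s (phi j) i <= s (phi j.+1) i)%N.
Proof.
elim: k => [|k IH] kn.
  by exists id; split => // j.
have [phi [Hphi Hs]] := IH (ltnW kn).
have [psi [Hpsi Ha]] := nat_subseq (fun j => s (phi j) (Ordinal kn)).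
have phimono : {homo phi : a b / (a < b)%N >-> (a < b)%N}.
  by apply: homo_ltn => // y x z; apply: ltn_trans.
exists (fun j => phi (psi j)); split => [j|i ik j]; first exact: phimono.
rewrite ltnS leq_eqVlt in ik; case/orP: ik => [/eqP ik|ik].
  have -> : i = Ordinal kn by apply: val_inj.
  exact: Ha.
have := @homo_leq _ (fun j => s (phi j) i) leq (@leqnn) (fun y x z => @leq_trans y x z) (fun j => Hs i ik j).
by apply; apply: ltnW.
Qed.

Lemma dickson (s : nat -> 'X_{1..n}) : exists i j, (i < j)%N /\ (s i <= s j)%MM.
Proof.
have [phi [Hphi Hs]] := dickson_sub s (leqnn n).
exists (phi 0%N), (phi 1%N); split => //.
by apply/mnm_lepP => i; apply: Hs.
Qed.

Variable le : rel 'X_{1..n}.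
Hypothesis Hle : term_ordering le.

Lemma to_wf : well_founded (fun a b => tlt le a b).
Proof.
move=> x; apply: NNPP => Hx.
have Hn y : exists z, ~ Acc (fun a b => tlt le a b) y ->
   tlt le z y /\ ~ Acc (fun a b => tlt le a b) z.
  case: (classic (Acc (fun a b => tlt le a b) y)) => [H|H].
    by exists y.
  apply: NNPP => Hne; apply: H; constructor => z Hz.
  apply: NNPP => Hz'; apply: Hne; exists z => _; by split.
pose nx y := sval (constructive_indefinite_description _ (Hn y)).
have nxP y : ~ Acc (fun a b => tlt le a b) y ->
   tlt le (nx y) y /\ ~ Acc (fun a b => tlt le a b) (nx y).
  exact: (svalP (constructive_indefinite_description _ (Hn y))).
pose s k := iter k nx x.
have sA k : ~ Acc (fun a b => tlt le a b) (s k).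
  elim: k => [|k IH] //=; exact: (nxP _ IH).2.
have sD k : tlt le (s k.+1) (s k) by exact: (nxP _ (sA k)).1.
have sDD i j : (i < j)%N -> tlt le (s j) (s i).
  elim: j => [//|j IH]; rewrite ltnS leq_eqVlt => /orP [/eqP ->|/IH H] //.
  exact: (tlt_le_trans Hle (sD j) (tltW H)).
have [i [j [ij dij]]] := dickson s.
have := sDD _ _ ij; rewrite (tlt_nle Hle) => /negP; apply.
exact: (to_div Hle dij).
Qed.
End Dickson.

Section Ideal.
Variables (n : nat) (R : comRingType).
Implicit Types (S : seq {mpoly R[n]}) (f g h : {mpoly R[n]}).

Lemma gen_ideal_ideal S : is_ideal (gen_ideal S).
Proof.
split.
- exists (nseq (size S) 0); rewrite size_nseq; split => //.
  by rewrite big1 // => i _; rewrite nth_nseq; case: ifP; rewrite mul0r.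
- move=> f g [hs1 [s1 ->]] [hs2 [s2 ->]].
  exists [seq hs1`_i + hs2`_i | i <- iota 0 (size S)].
  rewrite size_map size_iota; split => //.
  rewrite -big_split /=; apply: eq_bigr => i _.
  by rewrite (nth_map 0%N) ?size_iota // nth_iota // add0n mulrDl.
- move=> h f [hs [s ->]]; exists (map (fun x => h * x) hs).
  rewrite size_map; split => //; rewrite mulr_sumr; apply: eq_bigr => i _.
  by rewrite (nth_map 0) ?s // mulrA.
Qed.

Lemma ideal_sum (J : {mpoly R[n]} -> Prop) (hs S : seq {mpoly R[n]}) :
  is_ideal J -> (forall g, g \in S -> J g) ->
  J (\sum_(i < size S) hs`_i * S`_i).
Proof.
case=> J0 JD JM HS; apply: (big_ind J) => // i _; apply: JM; apply: HS.
exact: mem_nth.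
Qed.

Lemma ideal_gen (J : {mpoly R[n]} -> Prop) S f :
  is_ideal J -> (forall g, g \in S -> J g) -> gen_ideal S f -> J f.
Proof. by move=> HJ HS [hs [_ ->]]; apply: ideal_sum. Qed.

Lemma gen_ideal_mem S g : g \in S -> gen_ideal S g.
Proof.
move=> gS; set j := index g S; have jS : (j < size S)%N by rewrite index_mem.
exists [seq (i == j)%:R | i <- iota 0 (size S)]; rewrite size_map size_iota.
split => //; rewrite (bigD1 (Ordinal jS)) //= big1 ?addr0.
  by rewrite (nth_map 0%N) ?size_iota // nth_iota // add0n eqxx mul1r nth_index.
move=> i /eqP ij; rewrite (nth_map 0%N) ?size_iota // nth_iota // add0n.
by case: eqP => [E|_]; [case: ij; apply: val_inj | rewrite mul0r].
Qed.

Lemma idealN (J : {mpoly R[n]} -> Prop) f : is_ideal J -> J f -> J (- f).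
Proof. by case=> _ _ JM Jf; rewrite -mulN1r; apply: JM. Qed.

Lemma idealB (J : {mpoly R[n]} -> Prop) f g : is_ideal J -> J f -> J g -> J (f - g).
Proof. move=> HJ Jf Jg; case: (HJ) => _ JD _; apply: JD => //; exact: idealN. Qed.

End Ideal.

Lemma gen_ideal_map n (R S : comRingType) (phi : {rmorphism R -> S})
   (G : seq {mpoly R[n]}) h :
  gen_ideal G h -> gen_ideal (map (map_mpoly phi) G) (map_mpoly phi h).
Proof.
case=> hs [s ->]; exists (map (map_mpoly phi) hs); rewrite !size_map; split => //.
rewrite rmorph_sum /=; apply: eq_bigr => i _; rewrite rmorphM /=.
by rewrite !(nth_map 0) ?s.
Qed.

Section Division.
Variables (n : nat) (le : rel 'X_{1..n}) (Hle : term_ordering le).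
Variable R : comRingType.
Implicit Types (f g h r : {mpoly R[n]}).

Definition div_ok (G : seq {mpoly R[n]}) f r :=
  [/\ gen_ideal G (f - r),
      (forall m, m \in msupp r -> forall g, g \in G -> ~~ (LT le g <= m)%MM) &
      (forall m, m \in msupp r -> exists2 m', m' \in msupp f & le m m')].

Lemma division (G : seq {mpoly R[n]}) : (forall g, g \in G -> LC le g = 1) ->
  forall f, exists r, div_ok G f r.
Proof.
move=> HG.
have H0 : div_ok G 0 0.
  split; rewrite ?(msupp00 n R) // subr0; by case: (gen_ideal_ideal G).
suff H : forall w f, f != 0 -> LT le f = w -> exists r, div_ok G f r.
  by move=> f; have [->|nz] := eqVneq f 0; [exists 0 | exact: H].
elim/(well_founded_ind (to_wf Hle)) => w IH f nz Ew.
have Hf' : forall f', (forall m, m \in msupp f' -> le m w) -> w \notin msupp f' ->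
    exists r, div_ok G f' r.
  move=> f' H1 H2; have [->|nz'] := eqVneq f' 0; first by exists 0.
  exact: (IH _ (LT_lt Hle H1 H2 nz')).
have wf : w \in msupp f by rewrite -Ew; exact: LT_in.
have lef m : m \in msupp f -> le m w by rewrite -Ew; exact: LT_max.
set c := f@_w.
case: (boolP (has (fun g => (LT le g <= w)%MM) G)).
  case/hasP => g gG gw; set a := (w - LT le g)%MM.
  have aw : (a + LT le g)%MM = w by rewrite /a submK.
  pose f' := f - c *: (g * 'X_[a]).
  have [r [r1 r2 r3]] : exists r, div_ok G f' r.
  apply: Hf'.
  - move=> m /msuppB_le; rewrite mem_cat => /orP [/lef //|/msuppZ_le].
    rewrite (perm_mem (msuppMX _ _)) => /mapP [m' m'g ->].
    rewrite -aw; apply: (to_addl Hle); exact: (LT_max Hle).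
  - rewrite mcoeff_msupp /f' mcoeffB mcoeffZ -aw mcoeffMX.
    by have := HG g gG; rewrite /LC => ->; rewrite mulr1 aw subrr eqxx.
  exists r; split => // [|m /r3 [m' m'f' mm']].
    have -> : f - r = (f' - r) + (c *: 'X_[a]) * g.
      by rewrite /f' -scalerAl mulrC; rewrite addrAC subrK.
    case: (gen_ideal_ideal G) => _ JD JM; apply: JD => //; apply: JM.
    exact: gen_ideal_mem.
  exists w => //; apply: (to_trans Hle mm').
  move: m'f' => /msuppB_le; rewrite mem_cat => /orP [/lef //|/msuppZ_le].
  rewrite (perm_mem (msuppMX _ _)) => /mapP [m'' m''g ->].
  rewrite -aw; apply: (to_addl Hle); exact: (LT_max Hle).
move=> Hnd; pose f' := f - c *: 'X_[w].
have [r [r1 r2 r3]] : exists r, div_ok G f' r.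
  apply: Hf'.
- move=> m /msuppB_le; rewrite mem_cat => /orP [/lef //|/msuppZ_le].
  by rewrite msuppX inE => /eqP ->; exact: (to_refl Hle).
- by rewrite mcoeff_msupp /f' mcoeffB mcoeffZ mcoeffX eqxx mulr1 subrr eqxx.
have cw : {subset msupp (r + c *: 'X_[w]) <= w :: msupp r}.
  move=> m /msuppD_le; rewrite mem_cat inE => /orP [->|/msuppZ_le]; first by rewrite orbT.
  by rewrite msuppX inE => ->.
exists (r + c *: 'X_[w]); split.
- by rewrite opprD addrA addrAC.
- move=> m /cw; rewrite inE => /orP [/eqP -> g gG|/r2 //].
  by apply/negP => H; move/hasP: Hnd; apply; exists g.
- move=> m /cw; rewrite inE => /orP [/eqP ->|/r3 [m' m'f' mm']].
    by exists w => //; exact: (to_refl Hle).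
  exists w => //; apply: (to_trans Hle mm').
  move: m'f' => /msuppB_le; rewrite mem_cat => /orP [/lef //|/msuppZ_le].
  by rewrite msuppX inE => /eqP ->; exact: (to_refl Hle).
Qed.

End Division.
Lemma den_frac (a b : int) : b != 0 -> (denq (a%:~R / b%:~R) %| b)%Z.
Proof.
move=> b0; set x : rat := a%:~R / b%:~R.
have E : numq x * b = a * denq x.
  apply: (@intr_inj rat); rewrite !intrM numqE /x.
  have : (b%:~R : rat) != 0 by rewrite intr_eq0.
  move=> bn; field; done.
have : (denq x %| numq x * b)%Z by rewrite E dvdz_mull.
rewrite Gauss_dvdzr // /coprimez /gcdz gcdnC; have := coprime_num_den x; by rewrite /coprime => /eqP ->.
Qed.

Section Pint.
Variable p : nat.

Definition pint : {pred rat} := fun x => coprime p `|denq x|.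

Lemma pint_frac (a b : int) : b != 0 -> coprime p `|b| -> pint (a%:~R / b%:~R).
Proof.
move=> b0 cb; rewrite /pint /=; apply: coprime_dvdr cb.
by rewrite -dvdzE den_frac.
Qed.

Lemma pintP x : pint x -> exists a b, [/\ b != 0, coprime p `|b| & x = a%:~R / b%:~R].
Proof.
move=> H; exists (numq x), (denq x); split; [exact: denq_neq0 | exact: H | by rewrite divq_num_den].
Qed.

Lemma pint_closed : subring_closed pint.
Proof.
split.
- by rewrite unfold_in /pint /= coprimen1.
- move=> x y /pintP [a [b [b0 cb ->]]] /pintP [c [d [d0 cd ->]]].
  have -> : a%:~R / b%:~R - c%:~R / d%:~R = (a * d - c * b)%:~R / (b * d)%:~R :> rat.
    have bn : (b%:~R : rat) != 0 by rewrite intr_eq0.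
    have dn : (d%:~R : rat) != 0 by rewrite intr_eq0.
    rewrite intrB !intrM; field; by rewrite bn dn.
  apply: pint_frac; first by rewrite mulf_neq0.
  by rewrite abszM coprimeMr cb cd.
- move=> x y /pintP [a [b [b0 cb ->]]] /pintP [c [d [d0 cd ->]]].
  have -> : a%:~R / b%:~R * (c%:~R / d%:~R) = (a * c)%:~R / (b * d)%:~R :> rat.
    have bn : (b%:~R : rat) != 0 by rewrite intr_eq0.
    have dn : (d%:~R : rat) != 0 by rewrite intr_eq0.
    rewrite !intrM; field; by rewrite bn dn.
  apply: pint_frac; first by rewrite mulf_neq0.
  by rewrite abszM coprimeMr cb cd.
Qed.

HB.instance Definition _ := GRing.isSubringClosed.Build rat pint pint_closed.

Record Zl := MkZp { zval :> rat; zvalP : zval \in pint }.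
HB.instance Definition _ := [isSub for zval].
HB.instance Definition _ := [Choice of Zl by <:].
HB.instance Definition _ := [SubChoice_isSubComNzRing of Zl by <:].




Lemma num_den_frac (a b : int) : b != 0 ->
  numq (a%:~R / b%:~R : rat) * b = a * denq (a%:~R / b%:~R : rat).
Proof.
move=> b0; set x : rat := a%:~R / b%:~R.
apply: (@intr_inj rat); rewrite !intrM numqE /x.
have : (b%:~R : rat) != 0 by rewrite intr_eq0.
move=> bn; field; done.
Qed.

Lemma frac_sub (F : fieldType) (a b c d : int) : (b%:~R : F) != 0 -> (d%:~R : F) != 0 ->
  a%:~R / b%:~R - c%:~R / d%:~R = (a * d - c * b)%:~R / (b * d)%:~R :> F.
Proof. move=> bn dn; rewrite intrB !intrM; field; by rewrite bn dn. Qed.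

Lemma frac_mul (F : fieldType) (a b c d : int) : (b%:~R : F) != 0 -> (d%:~R : F) != 0 ->
  a%:~R / b%:~R * (c%:~R / d%:~R) = (a * c)%:~R / (b * d)%:~R :> F.
Proof. move=> bn dn; rewrite !intrM; field; by rewrite bn dn. Qed.

Hypothesis pr : prime p.

Lemma Fp_int_eq0 (z : int) : ((z%:~R : 'F_p) == 0) = (p %| `|z|)%N.
Proof.
have Hn k : ((k%:R : 'F_p) == 0) = (p %| k)%N.
  have -> : (0 : 'F_p) = 0%:R by [].
  by rewrite -val_eqE /= !val_Fp_nat // mod0n.
case: z => k; first by rewrite -pmulrn Hn.
by rewrite NegzE mulrNz oppr_eq0 -pmulrn Hn.
Qed.

Lemma Fp_int_neq0 (z : int) : coprime p `|z| -> (z%:~R : 'F_p) != 0.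
Proof. by rewrite Fp_int_eq0 prime_coprime. Qed.

Lemma phi_frac (a b : int) : b != 0 -> coprime p `|b| ->
  rat_to_Fp p (a%:~R / b%:~R) = a%:~R / b%:~R.
Proof.
move=> b0 cb; rewrite /rat_to_Fp; apply/eqP.
have cd := pint_frac a b0 cb.
rewrite eqr_div ?Fp_int_neq0 // -!intrM num_den_frac //.
Qed.

Definition phiZ (x : Zl) : 'F_p := let _ := pr in rat_to_Fp p (val x).

Lemma phiZ_sub : GRing.zmod_morphism phiZ.
Proof.
move=> x y; rewrite /phiZ rmorphB /=.
have [a [b [b0 cb ->]]] := pintP (zvalP x).
have [c [d [d0 cd ->]]] := pintP (zvalP y).
rewrite frac_sub ?intr_eq0 // !phi_frac ?frac_sub ?Fp_int_neq0 ?mulf_neq0 //.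
by rewrite abszM coprimeMr cb cd.
Qed.

Lemma phiZ_mul : GRing.monoid_morphism phiZ.
Proof.
split.
  rewrite /phiZ rmorph1 /rat_to_Fp.
  have -> : numq 1 = 1 by []. have -> : denq 1 = 1 by [].
  by rewrite divr1.
move=> x y; rewrite /phiZ rmorphM /=.
have [a [b [b0 cb ->]]] := pintP (zvalP x).
have [c [d [d0 cd ->]]] := pintP (zvalP y).
rewrite frac_mul ?intr_eq0 // !phi_frac ?frac_mul ?Fp_int_neq0 ?mulf_neq0 //.
by rewrite abszM coprimeMr cb cd.
Qed.

HB.instance Definition _ := GRing.isZmodMorphism.Build Zl 'F_p phiZ phiZ_sub.
HB.instance Definition _ := GRing.isMonoidMorphism.Build Zl 'F_p phiZ phiZ_mul.


Lemma Fp_natK (y : 'F_p) : ((val y)%:R : 'F_p) = y.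
Proof.
apply: val_inj; rewrite /= val_Fp_nat // modn_small //.
have := ltn_ord y; move: (val y) => k; by rewrite Fp_cast.
Qed.

Lemma phiZ_surj (y : 'F_p) : phiZ ((val y)%:R) = y.
Proof. by rewrite rmorph_nat Fp_natK. Qed.

Lemma phiZ_p : phiZ (p%:R) = 0.
Proof. by rewrite rmorph_nat pchar_Fp_0. Qed.

Lemma phiZ_ker (x : Zl) : phiZ x = 0 -> exists y : Zl, x = p%:R * y.
Proof.
have [a [b [b0 cb xE]]] := pintP (zvalP x).
rewrite /phiZ /= xE phi_frac // => /eqP; rewrite mulf_eq0 invr_eq0.
rewrite (negbTE (Fp_int_neq0 cb)) orbF Fp_int_eq0 => Hp.
have /dvdzP [a' aE] : (p%:Z %| a)%Z by rewrite dvdzE.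
exists (@MkZp (a'%:~R / b%:~R) (pint_frac a' b0 cb)).
apply: val_inj; rewrite rmorphM rmorph_nat /= xE aE intrM -pmulrn; ring.
Qed.

End Pint.

Lemma mcoeff_map_gen n (R S : nzRingType) (f : R -> S) (p : {mpoly R[n]}) m :
  f 0 = 0 -> (map_mpoly f p)@_m = f p@_m.
Proof.
move=> f0; rewrite /map_mpoly /mmap raddf_sum /=.
under eq_bigr => m' _ do rewrite mmap1_id /= mcoeffCM mcoeffX.
case: (boolP (m \in msupp p)) => Hm.
  rewrite (bigD1_seq m) //= ?msupp_uniq // eqxx mulr1 big1 ?addr0 //.
  by move=> m' /negbTE ->; rewrite mulr0.
rewrite big1_seq; first by move: Hm; rewrite mcoeff_msupp negbK => /eqP ->.
move=> m' /andP [_ m'p]; case: eqP => [E|_]; last by rewrite mulr0.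
by rewrite -E m'p in Hm.
Qed.

Lemma mcoeff_sumX n (R S : comRingType) (f : {mpoly R[n]}) (g : 'X_{1..n} -> S) k :
  (\sum_(m <- msupp f) g m *: 'X_[m])@_k = if k \in msupp f then g k else 0.
Proof.
rewrite raddf_sum /=.
under eq_bigr => m' _ do rewrite mcoeffZ mcoeffX.
case: ifP => Hm.
  rewrite (bigD1_seq k) //= ?msupp_uniq // eqxx mulr1 big1 ?addr0 //.
  by move=> m' /negbTE ->; rewrite mulr0.
rewrite big1_seq //.
move=> m' /andP [_ m'p]; case: eqP => [E|_]; last by rewrite mulr0.
by rewrite -E m'p in Hm.
Qed.

Section PolyMaps.
Variables (n p : nat) (pr : prime p).
Local Notation iota F := (map_mpoly (val : Zl p -> rat) F).
Local Notation Phi F := (map_mpoly (phiZ pr) F).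

Lemma pi_iota (F : {mpoly (Zl p)[n]}) : pi_p p (iota F) = Phi F.
Proof.
have h0 : rat_to_Fp p 0 = 0 by rewrite /rat_to_Fp mul0r.
apply/mpolyP => m.
have E := @mcoeff_map_gen n rat 'F_p (rat_to_Fp p) (map_mpoly (val : Zl p -> rat) F) m h0.
rewrite [RHS]mcoeff_map_mpoly /phiZ /=; rewrite mcoeff_map_mpoly in E.
exact: E.
Qed.

Lemma msupp_iota (F : {mpoly (Zl p)[n]}) : msupp (iota F) =i msupp F.
Proof.
move=> m; rewrite !mcoeff_msupp mcoeff_map_mpoly raddf_eq0 //; exact: val_inj.
Qed.

Lemma lift_rat (f : {mpoly rat[n]}) : (forall m, pint p f@_m) ->
  exists F : {mpoly (Zl p)[n]}, iota F = f.
Proof.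
move=> H; exists (\sum_(m <- msupp f) (insubd (0 : Zl p) f@_m) *: 'X_[m]).
apply/mpolyP => k; rewrite mcoeff_map_gen // mcoeff_sumX.
case: ifP => kf; first by rewrite insubdK //; exact: H.
by move/negbT: kf; rewrite mcoeff_msupp negbK => /eqP ->.
Qed.

Lemma lift_Fp (k : {mpoly 'F_p[n]}) : exists K : {mpoly (Zl p)[n]}, Phi K = k.
Proof.
exists (\sum_(m <- msupp k) ((val k@_m)%:R : Zl p) *: 'X_[m]).
apply/mpolyP => m; rewrite mcoeff_map_mpoly mcoeff_sumX.
case: ifP => kf; first exact: phiZ_surj.
by move/negbT: kf; rewrite mcoeff_msupp negbK => /eqP ->; rewrite raddf0.
Qed.

End PolyMaps.

Lemma dvd_biglcm (T : eqType) (s : seq T) (F : T -> nat) x :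
  x \in s -> (F x %| \big[lcmn/1%N]_(y <- s) F y)%N.
Proof.
elim: s => // y s IH; rewrite inE big_cons => /orP [/eqP ->|/IH H].
  exact: dvdn_lcml.
exact: dvdn_trans H (dvdn_lcmr _ _).
Qed.

Lemma good_pint n p (G : seq {mpoly rat[n]}) : prime p -> ~~ (p %| denG G)%N ->
  forall g, g \in G -> forall m, pint p g@_m.
Proof.
move=> pr Hp g gG m; rewrite /pint /= prime_coprime //.
case: (boolP (m \in msupp g)) => Hm; last first.
  by move: Hm; rewrite mcoeff_msupp negbK => /eqP ->; rewrite dvdn1; case: p pr {Hp} => [|[]].
apply/negP => H; move/negP: Hp; apply.
apply: dvdn_trans H _; rewrite /denG.
apply: dvdn_trans _ (dvd_biglcm (@den n) gG); rewrite /den.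
exact: (dvd_biglcm (fun m => `|denq g@_m|%N) Hm).
Qed.

Lemma mcoeff_pi n p (f : {mpoly rat[n]}) m : (pi_p p f)@_m = rat_to_Fp p f@_m.
Proof.
have h0 : rat_to_Fp p 0 = 0 by rewrite /rat_to_Fp mul0r.
exact: (@mcoeff_map_gen n rat 'F_p (rat_to_Fp p) f m h0).
Qed.

Lemma msupp_pi n p (f : {mpoly rat[n]}) : {subset msupp (pi_p p f) <= msupp f}.
Proof.
move=> m; rewrite !mcoeff_msupp mcoeff_pi; apply: contraNN => /eqP ->.
by rewrite /rat_to_Fp mul0r.
Qed.

Lemma rat_to_Fp1 p : rat_to_Fp p 1 = 1.
Proof.
rewrite /rat_to_Fp; have -> : numq 1 = 1 by []. have -> : denq 1 = 1 by [].
by rewrite divr1.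
Qed.

Section OFacts.
Variables (n : nat) (le : rel 'X_{1..n}) (Hle : term_ordering le).
Variables (R : comRingType) (J : {mpoly R[n]} -> Prop) (O : seq 'X_{1..n}).
Hypothesis HO : O_tuple le J O.

Lemma O_lt f : J f -> f != 0 -> exists2 o, o \in O & (o <= LT le f)%MM.
Proof.
case: HO => _ [G [[[_ HG] _ _ _] Hperm]] Jf nz.
have [g gG /andP [_ Hg]] := HG f Jf nz.
exists (LT le g) => //; rewrite (perm_mem Hperm); exact: map_f.
Qed.

Lemma O_gen o : o \in O -> exists f, [/\ J f, f != 0 & LT le f = o].
Proof.
case: HO => _ [G [[[HJ _] _ HLC _] Hperm]]; rewrite (perm_mem Hperm).
case/mapP => g gG ->; exists g; split => //; first exact: HJ.
apply/eqP => g0; have := HLC g gG; rewrite /LC g0 mcoeff0 => /eqP.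
by rewrite eq_sym oner_eq0.
Qed.

Lemma O_min o o' : o \in O -> o' \in O -> o != o' -> ~~ (o <= o')%MM.
Proof.
case: HO => _ [G [[_ _ _ Hmin] Hperm]]; rewrite !(perm_mem Hperm).
case/mapP => g gG -> /mapP [g' g'G ->] ne; apply: Hmin => //.
by apply: contraNneq ne => ->.
Qed.

End OFacts.

Section Comb.
Variables (n : nat) (le : rel 'X_{1..n}) (Hle : term_ordering le).

Lemma tlt_trans : transitive (tlt le).
Proof. move=> y x z H1 H2; exact: (tlt_le_trans Hle H1 (tltW H2)). Qed.

Lemma tlt_irr x : tlt le x x = false.
Proof. by rewrite /tlt eqxx andbF. Qed.

Lemma snth_lt (s : seq 'X_{1..n}) i j : sorted (tlt le) s -> (i < j)%N -> (j < size s)%N ->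
  tlt le (nth 0%MM s i) (nth 0%MM s j).
Proof.
move=> ss ij js; apply: (sorted_ltn_nth tlt_trans) => //.
by rewrite inE; apply: ltn_trans ij js.
Qed.

Lemma snth_le (s : seq 'X_{1..n}) i j : sorted (tlt le) s -> (i <= j)%N -> (j < size s)%N ->
  le (nth 0%MM s i) (nth 0%MM s j).
Proof.
move=> ss; rewrite leq_eqVlt => /orP [/eqP -> _|ij js]; first exact: (to_refl Hle).
exact: tltW (snth_lt ss ij js).
Qed.

Lemma prec_t (Op Oq : seq 'X_{1..n}) :
  sorted (tlt le) Op -> sorted (tlt le) Oq ->
  (forall o o', o \in Oq -> o' \in Oq -> o != o' -> ~~ (o <= o')%MM) ->
  prec le Oq Op ->
  exists t, [/\ t \in Oq, (forall o, o \in Op -> ~~ (o <= t)%MM),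
     (forall o, o \in Op -> tlt le o t -> o \in Oq) &
     (forall o, o \in Oq -> tlt le o t -> o \in Op)].
Proof.
move=> sp sq HQ [[szlt Eq]|[k [kp kq Etk Hk]]].
- exists (nth 0%MM Oq (size Op)); split.
  + exact: mem_nth.
  + move=> o oP; have oQ : o \in Oq by move: oP; rewrite {1}Eq => /mem_take.
    have io : (index o Oq < size Op)%N by rewrite -in_take // -Eq.
    apply: HQ => //; first exact: mem_nth.
    apply/eqP => E; have := snth_lt sq io szlt; rewrite nth_index // E.
    by rewrite tlt_irr.
  + by move=> o oP _; move: oP; rewrite {1}Eq => /mem_take.
  + move=> o oQ ot; rewrite Eq in_take // ltnNge; apply/negP => ri.
    have := snth_le sq ri; rewrite index_mem nth_index // => /(_ oQ) H.
    by move: ot; rewrite (tlt_nle Hle) H.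
- exists (nth 0%MM Oq k); split.
  + exact: mem_nth.
  + move=> o oP; have ip : (index o Op < size Op)%N by rewrite index_mem.
    case: (ltnP (index o Op) k) => ik.
      have oT : o \in take k Oq by rewrite -Etk in_take.
      have oQ : o \in Oq by move/mem_take: oT.
      have jk : (index o Oq < k)%N by rewrite -in_take.
      apply: HQ => //; first exact: mem_nth.
      apply/eqP => E; have := snth_lt sq jk kq; rewrite nth_index // E.
      by rewrite tlt_irr.
    apply/negP => /(to_div Hle) H.
    have := snth_le sp ik ip; rewrite nth_index // => H2.
    by move: Hk; rewrite (tlt_nle Hle) (to_trans Hle H2 H).
  + move=> o oP ot; have ip : (index o Op < size Op)%N by rewrite index_mem.
    case: (ltnP (index o Op) k) => ik.
      have oT : o \in take k Oq by rewrite -Etk in_take.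
      by move/mem_take: oT.
    have := snth_le sp ik ip; rewrite nth_index // => H2.
    have := tlt_trans ot Hk; rewrite (tlt_nle Hle) H2 //.
  + move=> o oQ ot; have jq : (index o Oq < size Oq)%N by rewrite index_mem.
    case: (ltnP (index o Oq) k) => jk.
      have oT : o \in take k Op by rewrite Etk in_take.
      by move/mem_take: oT.
    have := snth_le sq jk jq; rewrite nth_index // => H2.
    by move: ot; rewrite (tlt_nle Hle) H2.
Qed.
End Comb.

Section Scale.
Variables (n p : nat) (pr : prime p).

Lemma int_pint (z : int) : pint p (z%:~R).
Proof. by rewrite /pint /= denq_int coprimen1. Qed.

Lemma rat_to_Fp_int (z : int) : rat_to_Fp p z%:~R = z%:~R.
Proof.
have := @phi_frac p pr z 1 isT; rewrite /= coprimen1 => /(_ isT).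
by rewrite mulr1z !divr1.
Qed.

Lemma scale_int (g : {mpoly rat[n]}) :
  exists c : rat, c != 0 /\ exists z : 'X_{1..n} -> int, forall m, c * g@_m = (z m)%:~R.
Proof.
set D : int := \prod_(m <- msupp g) denq g@_m.
have D0 : D != 0 by rewrite prodf_seq_neq0; apply/allP => m _; exact: denq_neq0.
exists D%:~R; split; first by rewrite intr_eq0.
have H m : exists z : int, D%:~R * g@_m = z%:~R.
  case: (boolP (m \in msupp g)) => Hm; last first.
    by exists 0; move: Hm; rewrite mcoeff_msupp negbK => /eqP ->; rewrite mulr0.
  exists (numq g@_m * \prod_(m' <- rem m (msupp g)) denq g@_m').
  have iM (a b : int) : (a * b)%:~R = a%:~R * b%:~R :> rat by rewrite intrM.
  rewrite /D (big_rem m) //= !iM numqE; ring.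
exists (fun m => sval (constructive_indefinite_description _ (H m))) => m.
exact: (svalP (constructive_indefinite_description _ (H m))).
Qed.

Lemma scale_lemma (g : {mpoly rat[n]}) : g != 0 ->
  exists c : rat, (forall m, pint p (c * g@_m)) /\ pi_p p (c *: g) != 0.
Proof.
move=> nz; have [m0 Hm0] : exists m, m \in msupp g.
  move: nz; rewrite -msupp_eq0; case: (msupp g) => [|m s] //= _.
  by exists m; rewrite inE eqxx.
have [c [c0 [z Hz]]] := scale_int g.
suff : forall N c (z : 'X_{1..n} -> int), c != 0 -> (forall m, c * g@_m = (z m)%:~R) ->
  (`|z m0| < N)%N ->
  exists c : rat, (forall m, pint p (c * g@_m)) /\ pi_p p (c *: g) != 0.
  by move/(_ (`|z m0|.+1) c z c0 Hz); apply.
elim => // N IH {c c0 z Hz} c z c0 Hz zN.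
case: (classic (exists m, ~~ (p %| `|z m|)%N)) => [[m1 Hm1]|Hall].
  exists c; split => [m|]; first by rewrite Hz; exact: int_pint.
  apply/negP => /eqP E.
  have := mcoeff_pi p (c *: g) m1; rewrite E mcoeff0 mcoeffZ Hz rat_to_Fp_int.
  move/esym/eqP; rewrite Fp_int_eq0 //; exact/negP.
have Hd m : (p%:Z %| z m)%Z.
  rewrite dvdzE /=; case: (boolP (p %| `|z m|)%N) => // H; exfalso; apply: Hall; by exists m.
have p0 : (p%:R : rat) != 0 by rewrite pnatr_eq0; case: p pr.
apply: (IH (c / p%:R) (fun m => (z m %/ p)%Z)).
- by rewrite mulf_neq0 // invr_eq0.
- move=> m; have := Hz m; rewrite -{1}(divzK (Hd m)) intrM => E.
  rewrite mulrAC E; have -> : ((p%:Z)%:~R : rat) = p%:R by rewrite -pmulrn.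
  by rewrite mulfK.
- have zm0 : z m0 != 0.
    rewrite -(intr_eq0 rat) -Hz mulf_neq0 //; by rewrite -mcoeff_msupp.
  rewrite -ltnS; apply: leq_trans zN; rewrite ltnS.
  have E := divzK (Hd m0); rewrite -{2}E abszM /=.
  have zq0 : (z m0 %/ p)%Z != 0.
    by apply: contraNneq zm0 => Ez; rewrite -E Ez mul0r.
  rewrite -[X in (X < _)%N]muln1 ltn_mul2l absz_gt0 zq0 /=.
  by apply: prime_gt1.
Qed.
End Scale.

Lemma lift_seq n p (G : seq {mpoly rat[n]}) : (forall g, g \in G -> forall m, pint p g@_m) ->
  exists G' : seq {mpoly (Zl p)[n]}, map (map_mpoly (val : Zl p -> rat)) G' = G.
Proof.
elim: G => [|g G IH] H; first by exists [::].
have [g' Eg] := lift_rat (H g (mem_head _ _)).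
have [G' EG] : exists G' : seq {mpoly (Zl p)[n]}, map (map_mpoly (val : Zl p -> rat)) G' = G.
  by apply: IH => h hG; apply: H; rewrite inE hG orbT.
by exists (g' :: G'); rewrite /= Eg EG.
Qed.

Lemma LT_iota n p le (Hle : term_ordering le) (F : {mpoly (Zl p)[n]}) :
  LT le (map_mpoly (val : Zl p -> rat) F) = LT le F.
Proof. apply: (LT_eq_supp Hle); exact: msupp_iota. Qed.

Lemma LC_iota n p le (Hle : term_ordering le) (F : {mpoly (Zl p)[n]}) :
  LC le (map_mpoly (val : Zl p -> rat) F) = 1 -> LC le F = 1.
Proof.
rewrite /LC LT_iota // mcoeff_map_mpoly => E; apply: val_inj; by rewrite E rmorph1.
Qed.

Lemma iota_neq0 n p (F : {mpoly (Zl p)[n]}) :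
  (map_mpoly (val : Zl p -> rat) F == 0) = (F == 0).
Proof. by rewrite -!msupp_eq0; apply/eqP/eqP => E; apply: perm_small_eq => //; apply/uniq_perm; rewrite ?msupp_uniq // => m; rewrite -E msupp_iota. Qed.

Section FactF.
Variables (n : nat) (le : rel 'X_{1..n}) (Hle : term_ordering le).
Variables (I : {mpoly rat[n]} -> Prop) (HI : is_ideal I) (G : seq {mpoly rat[n]}).
Hypotheses (HG : groebner le I G) (HGm : forall g, g \in G -> LC le g = 1).
Variables (p : nat) (pr : prime p) (Gint : forall g, g \in G -> forall m, pint p g@_m).

Local Notation iota F := (map_mpoly (val : Zl p -> rat) F).

Lemma liftG : exists G' : seq {mpoly (Zl p)[n]}, map (map_mpoly (val : Zl p -> rat)) G' = G
   /\ forall g', g' \in G' -> LC le g' = 1.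
Proof.
have [G' EG] := lift_seq Gint; exists G'; split => // g' g'G.
apply: (LC_iota Hle); apply: HGm; rewrite -EG; exact: map_f.
Qed.

Lemma iota_ideal (G' : seq {mpoly (Zl p)[n]}) F :
  map (map_mpoly (val : Zl p -> rat)) G' = G -> gen_ideal G' F -> I (iota F).
Proof.
move=> EG /(gen_ideal_map val); rewrite EG; apply: ideal_gen => //.
by case: HG.
Qed.

Lemma factF f : I f -> (forall m, pint p f@_m) -> gen_ideal (map (pi_p p) G) (pi_p p f).
Proof.
move=> If fint; have [G' [EG HG'm]] := liftG.
have [F EF] := lift_rat fint.
have [r [r1 r2 r3]] := division Hle HG'm F.
have Ir : I (iota r).
  have -> : iota r = iota F - iota (F - r) by rewrite rmorphB /= opprB addrC subrK.
  apply: (idealB HI); first by rewrite EF.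
  exact: iota_ideal EG r1.
have r0 : r = 0.
  apply/eqP; apply: contraT => nz.
  have nz' : iota r != 0 by rewrite iota_neq0.
  case: HG => _ /(_ _ Ir nz') [g gG /andP [_ Hg]].
  move: gG; rewrite -EG => /mapP [g' g'G Eg].
  move: Hg; rewrite Eg !LT_iota // => Hg.
  by move: (r2 _ (LT_in Hle nz) g' g'G); rewrite Hg.
move: r1; rewrite r0 subr0 => /(gen_ideal_map (phiZ pr)).
rewrite -pi_iota EF; congr gen_ideal.
rewrite -EG -map_comp; apply: eq_map => g' /=; exact: (esym (pi_iota pr g')).
Qed.

End FactF.

Lemma mcoeff_sumXP n (R S : comRingType) (f : {mpoly R[n]}) (P : pred 'X_{1..n})
    (g : 'X_{1..n} -> S) k :
  (\sum_(m <- msupp f | P m) g m *: 'X_[m])@_k =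
  if (k \in msupp f) && P k then g k else 0.
Proof.
rewrite big_mkcond /=.
have -> : \sum_(i <- msupp f) (if P i then g i *: 'X_[i] else 0) =
          \sum_(i <- msupp f) (if P i then g i else 0) *: 'X_[i].
  by apply: eq_bigr => i _; case: (P i); rewrite ?scale0r.
rewrite mcoeff_sumX; by case: (k \in msupp f); case: (P k).
Qed.

Lemma msupp_sumXP n (R S : comRingType) (f : {mpoly R[n]}) (P : pred 'X_{1..n})
    (g : 'X_{1..n} -> S) k :
  k \in msupp (\sum_(m <- msupp f | P m) g m *: 'X_[m]) -> (k \in msupp f) && P k.
Proof. by rewrite mcoeff_msupp mcoeff_sumXP; case: ifP => //; rewrite eqxx. Qed.

Definition dq q (x : Zl q) : Zl q := insubd 0 (val x / q%:R).

Lemma dq_spec q (pr : prime q) (x : Zl q) : phiZ pr x = 0 -> x = q%:R * dq x.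
Proof.
move=> /phiZ_ker [y Ey]; rewrite {2}Ey /dq.
have q0 : (q%:R : rat) != 0 by rewrite pnatr_eq0; case: q pr {x y Ey}.
have -> : val (q%:R * y) / q%:R = val y by rewrite rmorphM rmorph_nat /= mulrC mulKf.
by rewrite valKd.
Qed.

Lemma lift_Fp_seq n q (pr : prime q) (hs : seq {mpoly 'F_q[n]}) :
  exists Ks : seq {mpoly (Zl q)[n]}, map (map_mpoly (phiZ pr)) Ks = hs.
Proof.
elim: hs => [|h hs [Ks EK]]; first by exists [::].
have [K EK1] := lift_Fp pr h; by exists (K :: Ks); rewrite /= EK1 EK.
Qed.

Lemma gen_lift n q (pr : prime q) (G' : seq {mpoly (Zl q)[n]}) h :
  gen_ideal (map (map_mpoly (phiZ pr)) G') h ->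
  exists F, gen_ideal G' F /\ map_mpoly (phiZ pr) F = h.
Proof.
case=> hs [s ->]; have [Ks EK] := lift_Fp_seq pr hs.
exists (\sum_(i < size G') Ks`_i * G'`_i); split.
  by exists Ks; rewrite -(size_map (map_mpoly (phiZ pr))) EK s size_map.
rewrite rmorph_sum /=; move: s; rewrite size_map => s.
have sK : size Ks = size G' by rewrite -(size_map (map_mpoly (phiZ pr))) EK s.
apply: eq_bigr => i _; rewrite rmorphM /= -EK !(nth_map 0) //.
by rewrite sK.
Qed.


Section Core.
Variables (n : nat) (sg tau : rel 'X_{1..n}) (Hs : term_ordering sg) (Ht : term_ordering tau).
Variables (I : {mpoly rat[n]} -> Prop) (HI : is_ideal I).
Variables (Gs Gt : seq {mpoly rat[n]}).
Hypotheses (HGs : groebner sg I Gs) (HGsm : forall g, g \in Gs -> LC sg g = 1).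
Hypotheses (HGt : groebner tau I Gt) (HGtm : forall g, g \in Gt -> LC tau g = 1).
Variables (q : nat) (pr : prime q).
Hypotheses (Gsint : forall g, g \in Gs -> forall m, pint q g@_m).
Hypotheses (Gtint : forall g, g \in Gt -> forall m, pint q g@_m).

Local Notation iota F := (map_mpoly (val : Zl q -> rat) F).
Local Notation Phi F := (map_mpoly (phiZ pr) F).

Lemma coreQA h : gen_ideal (map (pi_p q) Gs) h -> h != 0 ->
  exists2 g, g \in Gt & (LT tau g <= LT tau h)%MM.
Proof.
move=> Hh nzh; set u := LT tau h.
case: (boolP (has (fun g => LT tau g <= u)%MM Gt)) => [/hasP [g gG H]|Hn].
  by exists g.
exfalso.
have [Gs' [EGs _]] := liftG Hs HGsm Gsint.
have [Gt' [EGt HGt'm]] := liftG Ht HGtm Gtint.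
have EGs' : map (pi_p q) Gs = map (map_mpoly (phiZ pr)) Gs'.
  by rewrite -EGs -map_comp; apply: eq_map => g' /=; exact: pi_iota.
rewrite EGs' in Hh; have [F [HF EF]] := gen_lift Hh.
have IF : I (iota F) by apply: (iota_ideal HI HGs EGs HF).
pose Fgt := \sum_(m <- msupp F | tlt tau u m) F@_m *: 'X_[m].
pose Flt := \sum_(m <- msupp F | tlt tau m u) F@_m *: 'X_[m].
pose E := \sum_(m <- msupp F | tlt tau u m) dq (F@_m) *: 'X_[m].
have decF : F = q%:R *: E + F@_u *: 'X_[u] + Flt.
  apply/mpolyP => k; rewrite !mcoeffD mcoeffZ !mcoeff_sumXP mcoeffZ mcoeffX.
  have [->|ku] := eqVneq u k.
    rewrite !tlt_irr !andbF mulr0 mulr1 add0r addr0 //.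
  rewrite mulr0 addr0.
  case: (boolP (tlt tau u k)) => uk.
    have -> : tlt tau k u = false.
      by apply/negP => ku'; have := tlt_trans Ht uk ku'; rewrite tlt_irr.
    rewrite !andbF andbT addr0.
    case: (boolP (k \in msupp F)) => kF /=; last first.
      by move: (kF); rewrite -mcoeff_eq0 => /eqP ->; rewrite mulr0.
    apply: dq_spec.
    have := mcoeff_map_mpoly (phiZ pr) k F; rewrite EF => <-.
    apply/eqP; rewrite mcoeff_eq0; apply/negP => kh.
    by move: uk; rewrite (tlt_nle Ht) (LT_max Ht kh).
  have ku' : tlt tau k u.
    rewrite (tlt_nle Ht); apply/negP => uk'; move: uk; rewrite /tlt uk' /=.
    by rewrite ku.
  rewrite ku' !andbF !andbT mulr0 add0r.
  by case: ifP => // /negbT; rewrite mcoeff_msupp negbK => /eqP.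
have [rE [rE1 rE2 rE3]] := division Ht HGt'm E.
have [rL [rL1 rL2 rL3]] := division Ht HGt'm Flt.
have rLu : forall m, m \in msupp rL -> tlt tau m u.
  move=> m /rL3 [m' /msupp_sumXP /andP [_ m'u] mm'].
  exact: (le_tlt_trans Ht mm' m'u).
pose R := q%:R *: rE + F@_u *: 'X_[u] + rL.
have HFR : gen_ideal Gt' (F - R).
  have -> : F - R = (q%:R)%:MP * (E - rE) + (Flt - rL).
    rewrite {1}decF /R mul_mpolyC scalerBr.
    set a := q%:R *: E; set b := q%:R *: rE; set c := F@_u *: 'X_[u].
    ring.
  case: (gen_ideal_ideal Gt') => _ JD JM; apply: JD => //; exact: JM.
have IR : I (iota R).
  have -> : iota R = iota F - iota (F - R) by rewrite rmorphB /= opprB addrC subrK.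
  apply: (idealB HI) => //; exact: (iota_ideal HI HGt EGt HFR).
have suppR m : m \in msupp R -> [\/ m \in msupp rE, m = u | m \in msupp rL].
  move/msuppD_le; rewrite mem_cat => /orP [/msuppD_le|H]; last by apply: Or33.
  rewrite mem_cat => /orP [/msuppZ_le H|/msuppZ_le]; first by apply: Or31.
  by rewrite msuppX inE => /eqP ->; apply: Or32.
have R0 : R = 0.
  apply/eqP; apply: contraT => nz.
  have nz' : iota R != 0 by rewrite iota_neq0.
  case: HGt => _ /(_ _ IR nz') [g gG /andP [_ Hg]].
  move: (gG); rewrite -EGt => /mapP [g' g'G Eg].
  move: Hg; rewrite Eg !(LT_iota Ht) => Hg.
  case: (suppR _ (LT_in Ht nz)) => [H|H|H].
  - by move: (rE2 _ H g' g'G); rewrite Hg.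
  - have : has (fun g => LT tau g <= u)%MM Gt.
      by apply/hasP; exists g => //; rewrite Eg (LT_iota Ht) -H.
    by rewrite (negbTE Hn).
  - by move: (rL2 _ H g' g'G); rewrite Hg.
have := congr1 (mcoeff u) R0; rewrite /R !mcoeffD !mcoeffZ mcoeffX eqxx mulr1 mcoeff0.
have -> : rL@_u = 0.
  apply: memN_msupp_eq0; apply/negP => /rLu; by rewrite tlt_irr.
rewrite addr0 => /eqP; rewrite addr_eq0 => /eqP Fu.
have Fu' : F@_u = - (q%:R * rE@_u) by rewrite Fu opprK.
have := mcoeff_map_mpoly (phiZ pr) u F; rewrite EF Fu' (raddfN (phiZ pr)).
move=> Hu.
have Hz : phiZ pr (q%:R * rE@_u) = 0 by rewrite rmorphM rmorph_nat pchar_Fp_0 // mul0r.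
have : h@_u = 0 by rewrite Hu; apply/eqP; rewrite oppr_eq0; apply/eqP; exact: Hz.
move/eqP; rewrite mcoeff_eq0 /u; by rewrite (LT_in Ht nzh).
Qed.
End Core.

Lemma pi_monic n p le (Hle : term_ordering le) (g : {mpoly rat[n]}) :
  LC le g = 1 -> pi_p p g != 0 /\ LT le (pi_p p g) = LT le g.
Proof.
move=> H1.
have Ht : LT le g \in msupp (pi_p p g).
  by rewrite mcoeff_msupp mcoeff_pi; move: H1; rewrite /LC => ->; rewrite rat_to_Fp1 oner_eq0.
split; first by apply/eqP => E; move: Ht; rewrite E (msupp00 n 'F_p).
apply: (LT_unique Hle Ht) => m /msupp_pi; exact: LT_max.
Qed.

Unset Implicit Arguments.
Theorem corollary4p14 (n : nat) (sigma tau : rel 'X_{1..n})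
  (I : {mpoly rat[n]} -> Prop) (Gsigma Gtau : seq {mpoly rat[n]})
  (p q : nat) (Op Oq : seq 'X_{1..n}) :
  term_ordering sigma -> term_ordering tau ->
  is_ideal I -> (exists f, I f /\ f <> 0%R) ->
  reduced_groebner sigma I Gsigma ->
  reduced_groebner tau I Gtau ->
  good p Gsigma -> good q Gsigma ->
  O_tuple tau (I_mod p Gsigma) Op ->
  O_tuple tau (I_mod q Gsigma) Oq ->
  prec tau Oq Op ->
  bad q Gtau.
Proof.
move=> Hs Ht HI _ [HGs _ HGsm _] [HGt _ HGtm Rt] [prp gp] [prq gq] Otp Otq Hprec.
split => //; apply: contraT => gq'.
have Gsp := good_pint prp gp.
have Gsq := good_pint prq gq.
have Gtq := good_pint prq gq'.
have QA : forall m, (exists2 o, o \in Oq & (o <= m)%MM) ->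
    exists2 g, g \in Gtau & (LT tau g <= m)%MM.
  move=> m [o oQ om]; have [h [Ih nzh Eh]] := O_gen Otq oQ.
  have [g gG Hg] := coreQA Hs Ht HI HGs HGsm HGt HGtm prq Gsq Gtq Ih nzh.
  exists g => //; apply: lepm_trans om; by rewrite -Eh.
have AQ : forall m, (exists2 g, g \in Gtau & (LT tau g <= m)%MM) ->
    exists2 o, o \in Oq & (o <= m)%MM.
  move=> m [g gG gm].
  have Ig : I g by case: HGt => H _; exact: H.
  have Iq := factF Hs HI HGs HGsm prq Gsq Ig (Gtq g gG).
  have [nz ELT] := pi_monic q Ht (HGtm g gG).
  have [o oQ oo] := O_lt Otq Iq nz.
  exists o => //; apply: lepm_trans gm; by rewrite -ELT.
have [t [tQ tP PQ QP]] := prec_t Ht Otp.1 Otq.1 (O_min Otq) Hprec.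
have [g gG gt] := QA t (ex_intro2 _ _ t tQ (lepm_refl t)).
have Eg : LT tau g = t.
  apply/eqP; apply: contraT => ne.
  have lt : tlt tau (LT tau g) t by rewrite /tlt (to_div Ht gt) ne.
  have [o oQ og] := AQ (LT tau g) (ex_intro2 _ _ g gG (lepm_refl _)).
  have ot : tlt tau o t := le_tlt_trans Ht (to_div Ht og) lt.
  by move: (tP o (QP o oQ ot)); rewrite (lepm_trans og gt).
have nzg : g != 0.
  apply/eqP => g0; have := HGtm g gG; rewrite /LC g0 mcoeff0 => /eqP.
  by rewrite eq_sym oner_eq0.
have [c [cint cnz]] := scale_lemma prp nzg.
have Ic : I (c *: g).
  rewrite -mul_mpolyC; case: HI => _ _ HM; apply: HM; by case: HGt => H _; exact: H.
have cgint : forall m, pint p (c *: g)@_m by move=> m; rewrite mcoeffZ; exact: cint.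
have Ip := factF Hs HI HGs HGsm prp Gsp Ic cgint.
have [o oP os] := O_lt Otp Ip cnz.
set s := LT tau (pi_p p (c *: g)) in os.
have sg : s \in msupp g by apply: msuppZ_le; apply: msupp_pi; exact: LT_in.
have st : tau s t by rewrite -Eg; exact: LT_max.
case: (eqVneq s t) => [Est|nst].
  by move: (tP o oP); rewrite -Est os.
have lst : tlt tau s t by rewrite /tlt st nst.
have ot : tlt tau o t := le_tlt_trans Ht (to_div Ht os) lst.
have [g' g'G g's] := QA s (ex_intro2 _ _ o (PQ o oP ot) os).
case: (eqVneq g g') => [Egg|ne].
  move: lst; rewrite (tlt_nle Ht) -Egg Eg in g's *.
  by rewrite (to_div Ht g's).
by move: (Rt g g' s gG g'G ne sg); rewrite g's.
Qed.
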